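(* Every MG-space is homeomorphic to a decomposition space of some locally Menger space.
   Context: A space $X$ is Menger if for each sequence $(\mathcal{U}_n)$ of open covers of $X$ there is a sequence $(\mathcal{V}_n)$ with each $\mathcal{V}_n$ a finite subset of $\mathcal{U}_n$ and $\bigcup_{n}\bigcup\mathcal{V}_n=X$. A space $X$ is locally Menger if for each $x\in X$ there exist an open set $U$ and a Menger subspace $Y$ of $X$ with $x\in U\subseteq Y$. A space $X$ is Menger generated (an MG-space) if a subset $U\subseteq X$ is open in $X$ whenever $U\cap M$ is open in $M$ for every Menger subspace $M$ of $X$. A decomposition of a space $X$ is a partition $\mathcal{D}$ of $X$; with the decomposition map $\varphi:X\to\mathcal{D}$ sending $x$ to the member of $\mathcal{D}$ containing $x$, $\mathcal{D}$ is topologized by declaring $\mathcal{U}\subseteq\mathcal{D}$ open iff $\varphi^{-1}(\mathcal{U})$ is open in $X$; this is the decomposition space. *)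

(* Defs.v *)
From HB Require Import structures.
From mathcomp Require Import all_boot all_order.
From mathcomp Require Import all_classical.
From mathcomp Require Import topology.
Unset Printing Implicit Defensive.
Local Open Scope classical_set_scope.

Definition Menger_op {T : Type} (op : set (set T)) : Prop :=
  forall Us : nat -> set (set T),
    (forall n, Us n `<=` op /\ \bigcup_(u in Us n) u = setT) ->
    exists Vs : nat -> set (set T),
      (forall n, finite_set (Vs n) /\ Vs n `<=` Us n) /\
      \bigcup_n \bigcup_(v in Vs n) v = setT.

Definition subspace_open {X : topologicalType} (M : set X)
  : set (set {x : X | M x}) :=
  fun V => exists U : set X, open U /\ V = (@sval X M) @^-1` U.

Definition Menger_subspace {X : topologicalType} (M : set X) : Prop :=
  Menger_op (subspace_open M).

Definition locally_Menger (X : topologicalType) : Prop :=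
  forall x : X, exists (U Y : set X),
    open U /\ Menger_subspace Y /\ U x /\ U `<=` Y.

Definition MG_space (X : topologicalType) : Prop :=
  forall U : set X,
    (forall M : set X, Menger_subspace M ->
       subspace_open M ((@sval X M) @^-1` U)) ->
    open U.

Definition decomposition {Y : Type} (D : set (set Y)) : Prop :=
  (forall P, D P -> P !=set0) /\
  (forall P Q, D P -> D Q -> P `&` Q !=set0 -> P = Q) /\
  (forall y : Y, exists P, D P /\ P y).

(* Preimage under the decomposition map phi : Y -> D of a family W of members
   of D: phi(y) ∈ W iff y lies in some member of W (D being a partition). *)
Definition decomp_preimage {Y : Type} (W : set (set Y)) : set Y :=
  [set y | exists P, W P /\ P y].

Definition decomp_open {Y : topologicalType} (D : set (set Y))
  (W : set (set Y)) : Prop :=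
  W `<=` D /\ open (decomp_preimage W).

Definition homeomorphic_to_decomposition (X Y : topologicalType)
  (D : set (set Y)) : Prop :=
  exists f : X -> set Y,
    injective f /\ range f = D /\
    (forall U : set X, open U <-> decomp_open D (f @` U)).

(* Main.v *)
From HB Require Import structures.
Require Import Defs.
From mathcomp Require Import all_boot all_order all_classical topology.
Local Open Scope classical_set_scope.
Lemma Menger_image {A B : Type} (opA : set (set A)) (opB : set (set B)) (h : A -> B) :
  Menger_op opA -> (forall b, exists a, h a = b) ->
  (forall V, opB V -> opA (h @^-1` V)) -> Menger_op opB.
Proof.
move=> MA hs hc Us HUs.
pose Us' n := [set h @^-1` V | V in Us n].
have [Vs' [HV1 HV2]] : exists Vs' : nat -> set (set A),
  (forall n, finite_set (Vs' n) /\ Vs' n `<=` Us' n) /\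
  \bigcup_n \bigcup_(v in Vs' n) v = setT.
  apply: MA => n; split.
    by move=> _ [V /(HUs n).1 /hc HV <-].
  apply/seteqP; split => // a _.
  have : (\bigcup_(u in Us n) u) (h a) by rewrite (HUs n).2.
  by case=> V UV Vha; exists (h @^-1` V) => //; exists V.
have ch : forall n (V' : set A), exists V : set B, Vs' n V' -> Us n V /\ h @^-1` V = V'.
  move=> n V'; have [/(HV1 n).2 [V UV e]|] := pselect (Vs' n V').
    by exists V.
  by move=> nV; exists set0.
have /choice [g Hg] : forall nV : nat * set A, exists V : set B, Vs' nV.1 nV.2 -> Us nV.1 V /\ h @^-1` V = nV.2.
  by move=> [n V']; apply: ch.
exists (fun n => (fun V' => g (n, V')) @` Vs' n); split.
  move=> n; split; first exact/finite_image/(HV1 n).1.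
  by move=> _ [V' HV' <-]; exact: (Hg (n, V') HV').1.
apply/seteqP; split => // b _.
have [a <-] := hs b.
have : (\bigcup_n \bigcup_(v in Vs' n) v) a by rewrite HV2.
case=> n _ [V' HV' V'a].
exists n => //; exists (g (n, V')); first by exists V'.
by have [_ e] := Hg (n, V') HV'; rewrite /preimage /= in e; rewrite -e in V'a.
Qed.

Lemma Menger_single (X : topologicalType) (x : X) : Menger_subspace [set x].
Proof.
move=> Us HUs.
have p : [set x] x by [].
have /choice [g Hg] : forall n, exists V, Us n V /\ V (exist _ x p).
  move=> n; have : (\bigcup_(u in Us n) u) (exist _ x p) by rewrite (HUs n).2.
  by case=> V ? ?; exists V.
exists (fun n => [set g n]); split.
  by move=> n; split; [exact: finite_set1| move=> _ ->; exact: (Hg n).1].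
apply/seteqP; split => // -[y py] _.
have e : exist _ y py = exist [set x] x p.
  by apply: eq_exist; exact: py.
by exists 0%N => //; exists (g 0%N) => //; rewrite e; exact: (Hg 0%N).2.
Qed.

Definition Ysp (X : topologicalType) :=
  {p : set X * X | Menger_subspace p.1 /\ p.1 p.2}.
HB.instance Definition _ X := gen_eqMixin (Ysp X).
HB.instance Definition _ X := gen_choiceMixin (Ysp X).

Definition Yop (X : topologicalType) (W : set (Ysp X)) : Prop :=
  forall M, Menger_subspace M -> exists U : set X, open U /\
    forall y : Ysp X, (sval y).1 = M -> (W y <-> U (sval y).2).

Arguments Yop {X}.
Lemma YopT X : Yop (@setT (Ysp X)).
Proof. by move=> M _; exists setT; split => //; exact: openT. Qed.

Lemma YopI X : setI_closed (@Yop X).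
Proof.
move=> A B HA HB M hM.
have [UA [oA HA']] := HA M hM; have [UB [oB HB']] := HB M hM.
exists (UA `&` UB); split; first exact: openI.
move=> y ey; split.
  by case=> /(HA' y ey) ? /(HB' y ey).
by case=> /(HA' y ey) ? /(HB' y ey).
Qed.

Lemma YopU X (I : Type) (f : I -> set (Ysp X)) : (forall i, Yop (f i)) -> Yop (\bigcup_i f i).
Proof.
move=> Hf M hM.
have /choice [g Hg] : forall i, exists U : set X, open U /\
    forall y : Ysp X, (sval y).1 = M -> (f i y <-> U (sval y).2).
  by move=> i; exact: Hf.
exists (\bigcup_i g i); split; first by apply: bigcup_open => i _; exact: (Hg i).1.
move=> y ey; split.
  by case=> i _ /((Hg i).2 y ey) ?; exists i.
by case=> i _ /((Hg i).2 y ey) ?; exists i.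
Qed.

HB.instance Definition _ X := isOpenTopological.Build (Ysp X) (@YopT X) (@YopI X) (@YopU X).

Lemma YopenE X (W : set (Ysp X)) : open W = Yop W.
Proof. by []. Qed.

Definition fib (X : topologicalType) (x : X) : set (Ysp X) := [set y | (sval y).2 = x].
Definition pt (X : topologicalType) (x : X) : Ysp X :=
  exist _ ([set x], x) (conj (@Menger_single X x) erefl).

Lemma preimE (X : topologicalType) (U : set X) :
  decomp_preimage (fib X @` U) = [set y | U (sval y).2].
Proof.
apply/seteqP; split => y /=.
  by case=> _ [[x Ux <-] /= ->].
by move=> Uy; exists (fib X (sval y).2); split => //; exists (sval y).2.
Qed.

Theorem theorem4p24 (X : topologicalType) :
  MG_space X ->
  exists (Y : topologicalType) (D : set (set Y)),
    locally_Menger Y /\ decomposition D /\ homeomorphic_to_decomposition X Y D.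
Proof.
move=> MG.
exists (Ysp X : topologicalType), (range (fib X)); split; [|split].
- move=> y0.
  set M := (sval y0).1; have hM : Menger_subspace M := (svalP y0).1.
  exists [set y : Ysp X | (sval y).1 = M], [set y : Ysp X | (sval y).1 = M].
  split; [|split; [|by split]].
    rewrite YopenE => M' _.
    have [eM|nM] := pselect (M' = M).
      exists setT; split; first exact: openT.
      by move=> y ey /=; split => // _; rewrite ey eM.
    exists set0; split; first exact: open0.
    by move=> y ey /=; split => //; rewrite ey.
  pose h (m : {x : X | M x}) : {y : Ysp X | (sval y).1 = M} :=
    exist _ (exist _ (M, sval m) (conj hM (svalP m))) erefl.
  apply: (@Menger_image _ _ _ _ h hM).
    case=> [[[M' x] [hM' hx]] hz] /=; simpl in hz; subst M'.
    exists (exist _ x hx); apply: eq_exist; apply: eq_exist => //.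
  move=> V [W [oW ->]].
  rewrite YopenE in oW; have [U' [oU' HU']] := oW M hM.
  exists U'; split => //.
  apply/funext => m; apply/propext.
  exact: (HU' (sval (h m)) erefl).
- split; [|split].
  + by move=> _ [x _ <-]; exists (@pt X x).
  + move=> _ _ [x _ <-] [x' _ <-] [y [/= e1 e2]].
    by rewrite -e1 -e2.
  + by move=> y; exists (fib X (sval y).2); split => //; exists (sval y).2.
- exists (fib X); split; [|split] => //.
  + move=> x x' e.
    have : fib X x (@pt X x) by [].
    by rewrite e.
  + move=> U; split.
      move=> oU; split; first by move=> _ [x _ <-]; exists x.
      rewrite preimE YopenE => M hM; exists U; split => //.
    case=> _; rewrite preimE YopenE => oY.
    apply: MG => M hM.
    have [U' [oU' HU']] := oY M hM.
    exists U'; split => //.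
    apply/funext => m; apply/propext.
    exact: (HU' (exist _ (M, sval m) (conj hM (svalP m))) erefl).
Qed.
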